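(* Let $(p,q)=(6/5,6)$. Then for every $x \in [0,\pi_{6/5,6}/4]$, \[ \sin_{6/5,6}{(2x)} =\frac{2^{1/6}\sin_{6/5,6}{x}\,\cos_{6/5,6}^{1/5}{x}\left(3+\sqrt{1+32\sin_{6/5,6}^6{x}\, \cos_{6/5,6}^{6/5}{x}}\right)^{1/2}}{\left(1+32\sin_{6/5,6}^6{x}\,\cos_{6/5,6}^{6/5}{x}\right)^{1/4} \left(1+\sqrt{1+32\sin_{6/5,6}^6{x}\,\cos_{6/5,6}^{6/5}{x}}\right)^{1/6}}. \]
   Context: For $1<p,q<\infty$ let $F_{p,q}(x)=\int_0^x (1-t^q)^{-1/p}\,dt$ for $x\in[0,1]$, and $\pi_{p,q}=2F_{p,q}(1)$. The generalized sine $\sin_{p,q}$ is defined on $[0,\pi_{p,q}/2]$ as the inverse function of $F_{p,q}$ (an increasing function onto $[0,1]$), extended to $(\pi_{p,q}/2,\pi_{p,q}]$ by $\sin_{p,q}x=\sin_{p,q}(\pi_{p,q}-x)$, and to all of $\mathbb{R}$ as an odd $2\pi_{p,q}$-periodic function. It is $C^1$, and the generalized cosine is $\cos_{p,q}x := \frac{d}{dx}\sin_{p,q}x$; it satisfies $|\cos_{p,q}x|^p+|\sin_{p,q}x|^q=1$, and $\cos_{p,q}x\ge 0$ on $[0,\pi_{p,q}/2]$. *)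

(* Defs.v *)
From Stdlib Require Import Reals ClassicalEpsilon.
From Coquelicot Require Import Coquelicot.
Open Scope R_scope.

(* t^q for t >= 0 (with 0^q = 0, q > 0); only used for t in [0,1]. *)
Definition rpow (t a : R) : R := if Rlt_dec 0 t then Rpower t a else 0.

Definition integrand_pq (p q : R) (t : R) : R :=
  Rpower (1 - rpow t q) (- / p).

Definition pi_pq (p q : R) : R :=
  2 * RInt_gen (integrand_pq p q) (at_point 0) (at_left 1).

Definition F_pq (p q : R) (x : R) : R :=
  if Rlt_dec x 1 then RInt (integrand_pq p q) 0 x else pi_pq p q / 2.

Definition sin0_pq (p q : R) (y : R) : R :=
  epsilon (inhabits 0) (fun x => 0 <= x <= 1 /\ F_pq p q x = y).

(* sin_{p,q} on all of R: symmetric about pi/2 on [0,pi], odd, 2pi-periodic *)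
Definition sin_pq (p q : R) (y : R) : R :=
  let P := pi_pq p q in
  let r := y - 2 * P * IZR (Int_part ((y + P) / (2 * P))) in  (* r in [-P, P) *)
  let s := fun u => if Rle_dec u (P / 2) then sin0_pq p q u
                    else sin0_pq p q (P - u) in
  if Rlt_dec r 0 then - s (- r) else s r.

Definition cos_pq (p q : R) (x : R) : R := Derive (sin_pq p q) x.

(* Main.v *)
Require Import Defs.
From Stdlib Require Import Reals Lra Lia ClassicalEpsilon.
From Coquelicot Require Import Coquelicot.
Open Scope R_scope.

Definition f0 := integrand_pq (6/5) 6.
Definition FF := F_pq (6/5) 6.

Lemma rp6 y : 0 < y -> Rpower y 6 = y ^ 6.
Proof. intros; rewrite <- Rpower_pow by auto. f_equal. simpl; ring. Qed.

Lemma powlt x y n : 0 <= x < y -> (0 < n)%nat -> x ^ n < y ^ n.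
Proof.
  intros H Hn. induction n as [|n IH]. lia.
  destruct n. simpl; lra.
  assert (x ^ S n < y ^ S n) by (apply IH; lia).
  change (x * x ^ S n < y * y ^ S n).
  assert (0 <= x ^ S n) by (apply pow_le; lra).
  nra.
Qed.

Lemma exd_cont (f : R -> R) x : ex_derive f x -> continuous f x.
Proof. intros H. apply (ex_derive_continuous (K:=R_AbsRing) (V:=R_NormedModule)); exact H. Qed.

Lemma f0_pos t : 0 < f0 t.
Proof. unfold f0, integrand_pq, Rpower. apply exp_pos. Qed.

Lemma f0_eq t : f0 t = exp (- (5/6) * ln (1 - ((t + Rabs t)/2) ^ 6)).
Proof.
  unfold f0, integrand_pq, rpow, Rpower.
  replace (- / (6/5)) with (-(5/6)) by field.
  destruct (Rlt_dec 0 t).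
  - rewrite Rabs_right by lra. replace ((t+t)/2) with t by field.
    rewrite <- (rp6 t) by lra. reflexivity.
  - rewrite Rabs_left1 by lra. replace ((t + - t)/2) with 0 by field.
    replace (0^6) with 0 by ring. reflexivity.
Qed.

Lemma f0_pos_eq t : 0 < t -> f0 t = Rpower (1 - t ^ 6) (-(5/6)).
Proof.
  intros; rewrite f0_eq. rewrite Rabs_right by lra. replace ((t+t)/2) with t by field. reflexivity.
Qed.

Lemma f0_cont t : t < 1 -> continuous f0 t.
Proof.
  intros Ht.
  apply continuous_ext with (f := fun t => exp (- (5/6) * ln (1 - ((t + Rabs t)/2) ^ 6))).
  { intros; symmetry; apply f0_eq. }
  assert (Hg : 0 <= (t + Rabs t)/2 < 1).
  { destruct (Rle_dec 0 t). rewrite Rabs_right by lra; lra. rewrite Rabs_left by lra; lra. }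
  assert (Hp : 0 < 1 - ((t + Rabs t)/2) ^ 6).
  { assert (((t + Rabs t)/2) ^ 6 < 1). { replace 1 with (1 ^ 6) by ring. apply powlt; lra || lia. }
    lra. }
  apply continuous_comp with (g := fun u => exp (- (5/6) * ln (1 - u ^ 6))).
  - apply continuity_pt_filterlim.
    apply continuity_pt_mult.
    + apply continuity_pt_plus. apply derivable_continuous_pt, derivable_pt_id.
      apply Rcontinuity_abs.
    + apply continuity_pt_const. intros a b; reflexivity.
  - apply exd_cont. auto_derive. auto.
Qed.
Lemma exRI b : b < 1 -> ex_RInt f0 0 b.
Proof.
  intros Hb. apply (ex_RInt_continuous (V:=R_CompleteNormedModule)). intros z Hz. apply f0_cont.
  assert (Rmax 0 b < 1) by (apply Rmax_lub_lt; lra). lra.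
Qed.

Lemma FF_lt1 y : y < 1 -> FF y = RInt f0 0 y.
Proof. intros; unfold FF, F_pq; destruct (Rlt_dec y 1); [reflexivity|lra]. Qed.

Lemma FF_0 : FF 0 = 0.
Proof. rewrite FF_lt1 by lra. apply (RInt_point (V:=R_CompleteNormedModule)). Qed.

Lemma FF_deriv y : y < 1 -> is_derive FF y (f0 y).
Proof.
  intros Hy.
  apply is_derive_ext_loc with (f := RInt f0 0).
  { exists (mkposreal (1 - y) ltac:(lra)). intros z Hz. 
    change (Rabs (z - y) < 1 - y) in Hz. apply Rabs_lt_between' in Hz.
    symmetry; apply FF_lt1; lra. }
  apply is_derive_RInt with (a := 0).
  { exists (mkposreal (1 - y) ltac:(lra)). intros z Hz.
    change (Rabs (z - y) < 1 - y) in Hz. apply Rabs_lt_between' in Hz.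
    apply RInt_correct, exRI; lra. }
  apply f0_cont; auto.
Qed.

Lemma FF_cont y : y < 1 -> continuity_pt FF y.
Proof.
  intros Hy. apply continuity_pt_filterlim. apply exd_cont.
  eexists; apply FF_deriv; auto.
Qed.

Lemma FF_strict a b : a < b -> b < 1 -> FF a < FF b.
Proof.
  intros Hab Hb.
  destruct (MVT_gen FF a b f0) as [c [Hc Heq]].
  - intros x Hx. apply FF_deriv. rewrite Rmax_right in Hx; lra.
  - intros x Hx. apply FF_cont. rewrite Rmax_right in Hx; lra.
  - rewrite Rmin_left in Hc by lra. rewrite Rmax_right in Hc by lra.
    pose proof (f0_pos c). nra.
Qed.

Lemma FF_mono a b : a <= b -> b < 1 -> FF a <= FF b.
Proof. intros. destruct (Req_dec a b). subst; lra. left; apply FF_strict; lra. Qed.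
Definition pp t := 1 + 32 * t^6 * (1 - t^6).
Definition ww t := sqrt (pp t).
Definition HH t := (ww t - 1) * (ww t + 3)^3 / (16 * ww t ^ 3).
Definition KK t := 2 * (1 - t^6) * (ww t + 3)^3 / (ww t ^ 3 * (1 + ww t)).
Definition hh t := t * Rpower (KK t) (1/6).
Definition sig := Rpower (1/2) (1/6).

Lemma t6_nn t : 0 <= t ^ 6.
Proof. replace (t^6) with ((t^3)^2) by ring. apply pow2_ge_0. Qed.

Lemma pp_ge1 t : t ^ 6 < 1 -> 1 <= pp t.
Proof. intros; unfold pp; pose proof (t6_nn t); nra. Qed.

Lemma ww_sq t : t ^ 6 < 1 -> ww t * ww t = pp t.
Proof. intros; unfold ww; apply sqrt_sqrt; pose proof (pp_ge1 t H); lra. Qed.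

Lemma ww_ge1 t : t ^ 6 < 1 -> 1 <= ww t.
Proof. intros H. pose proof (ww_sq t H). pose proof (pp_ge1 t H).
  assert (0 <= ww t) by apply sqrt_pos. nra. Qed.

Lemma KK_pos t : t ^ 6 < 1 -> 0 < KK t.
Proof. intros H. pose proof (ww_ge1 t H). unfold KK.
  apply Rdiv_lt_0_compat. apply Rmult_lt_0_compat. lra. apply pow_lt; lra.
  apply Rmult_lt_0_compat. apply pow_lt; lra. lra. Qed.

Lemma HH_KK t : t ^ 6 < 1 -> HH t = t ^ 6 * KK t.
Proof.
  intros H. pose proof (ww_ge1 t H). pose proof (ww_sq t H). unfold HH, KK.
  set (w := ww t) in *. unfold pp in *.
  assert (E : w - 1 = 32 * t^6 * (1 - t^6) / (1 + w)).
  { replace (32 * t^6 * (1 - t^6)) with (w*w - 1) by lra. field. lra. }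
  rewrite E. field. lra.
Qed.
Lemma Rpower_t6 t : 0 < t -> Rpower (t ^ 6) (1/6) = t.
Proof. intros. rewrite <- rp6 by auto. rewrite Rpower_mult. replace (6 * (1/6)) with 1 by field.
  apply Rpower_1; auto. Qed.

Lemma Rpower_one a : Rpower 1 a = 1.
Proof. unfold Rpower. rewrite ln_1, Rmult_0_r. apply exp_0. Qed.

Lemma hh_H t : 0 < t -> t ^ 6 < 1 -> hh t = Rpower (HH t) (1/6).
Proof.
  intros H0 H1. rewrite HH_KK by auto. rewrite <- Rpower_mult_distr.
  rewrite Rpower_t6 by auto. reflexivity. apply pow_lt; auto. apply KK_pos; auto.
Qed.

Lemma sig_pos : 0 < sig.
Proof. unfold sig, Rpower; apply exp_pos. Qed.

Lemma sig6 : sig ^ 6 = 1/2.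
Proof. rewrite <- rp6 by apply sig_pos. unfold sig. rewrite Rpower_mult.
  replace (1/6*6) with 1 by field. apply Rpower_1; lra. Qed.

Lemma sig_lt1 : sig < 1.
Proof. destruct (Rlt_le_dec sig 1) as [h|h]; auto.
  assert (1 ^ 6 <= sig ^ 6) by (apply pow_incr; lra). rewrite sig6 in H. simpl in H. lra. Qed.

Lemma ww_sig : ww sig = 3.
Proof. unfold ww, pp. rewrite sig6. replace (1 + 32 * (1/2) * (1 - 1/2)) with (3*3) by field.
  apply sqrt_square; lra. Qed.

Lemma hh_sig : hh sig = 1.
Proof.
  unfold hh, KK. rewrite ww_sig, sig6.
  replace (2 * (1 - 1 / 2) * (3 + 3) ^ 3 / (3 ^ 3 * (1 + 3))) with 2 by field.
  unfold sig. rewrite Rpower_mult_distr by lra. replace (1/2*2) with 1 by field.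
  apply Rpower_one.
Qed.

Lemma hh_exd t : t ^ 6 < 1 -> ex_derive hh t.
Proof.
  intros H. pose proof (ww_ge1 t H) as Hw. pose proof (KK_pos t H) as HK. pose proof (pp_ge1 t H).
  unfold hh, Rpower, KK, ww, pp in *.
  auto_derive. simpl in *; unfold Rminus in *. set (s := sqrt _) in *.
  assert (0 < s * (s * (s * 1)) * (1 + s)). { apply Rmult_lt_0_compat; [|lra]. repeat (apply Rmult_lt_0_compat; try lra). }
  repeat split; try lra; try exact HK.

Qed.
Definition GG w := (w - 1) * (w + 3)^3 / (16 * w ^ 3).
Definition kk t := 2 * t * (1 - 2 * t ^ 6) / ww t.

Lemma GG_deriv w : 0 < w -> is_derive GG w ((9 - w*w)^2 / (16 * w^4)).
Proof. intros. unfold GG. auto_derive. apply Rgt_not_eq; simpl; repeat apply Rmult_lt_0_compat; lra. field. lra. Qed.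

Lemma ww_deriv t : t ^ 6 < 1 -> is_derive ww t (96 * t^5 * (1 - 2 * t^6) / ww t).
Proof. intros H. pose proof (pp_ge1 t H). pose proof (ww_ge1 t H). unfold ww, pp in *.
  auto_derive. simpl in *. unfold Rminus in *. lra. simpl in *. unfold Rminus, Rdiv in *. set (s := sqrt _) in *. field. lra. Qed.

Lemma HH_deriv t : t ^ 6 < 1 -> is_derive HH t (12 * kk t ^ 5).
Proof.
  intros H. pose proof (ww_ge1 t H). pose proof (ww_sq t H).
  replace (12 * kk t ^ 5) with ((96 * t^5 * (1 - 2 * t^6) / ww t) * ((9 - ww t * ww t)^2 / (16 * ww t^4))).
  apply (is_derive_comp (K:=R_AbsRing) (V:=R_NormedModule) GG ww t). apply GG_deriv; lra. apply ww_deriv; auto.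
  rewrite H1. unfold kk, pp. field. lra.
Qed.

Lemma HH_1mHH t : t ^ 6 < 1 -> (1 - HH t) * HH t = (1 - t^6) * kk t ^ 6.
Proof.
  intros H. pose proof (ww_ge1 t H). pose proof (ww_sq t H). unfold HH, kk.
  set (w := ww t) in *.
  transitivity ((w*w - 1) * (9 - w*w)^3 / (256 * w^6)). field. lra.
  rewrite H1. unfold pp. field. lra.
Qed.
Lemma t6_sig t : 0 <= t < sig -> t ^ 6 < 1/2.
Proof. intros. rewrite <- sig6. apply powlt; lra || lia. Qed.

Lemma t6_sig_le t : 0 <= t <= sig -> t ^ 6 <= 1/2.
Proof. intros. rewrite <- sig6. apply pow_incr; lra. Qed.

Lemma ww_range t : 0 < t < sig -> 1 < ww t < 3.
Proof.
  intros H. assert (Hu : t ^ 6 < 1/2) by (apply t6_sig; lra).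
  assert (Hu0 : 0 < t ^ 6) by (apply pow_lt; lra).
  pose proof (ww_sq t ltac:(lra)). pose proof (ww_ge1 t ltac:(lra)). unfold pp in *.
  split; nra.
Qed.

Lemma kk_pos t : 0 < t < sig -> 0 < kk t.
Proof.
  intros H. assert (Hu : t ^ 6 < 1/2) by (apply t6_sig; lra). pose proof (ww_range t H).
  unfold kk. apply Rdiv_lt_0_compat; [|lra]. apply Rmult_lt_0_compat; lra.
Qed.

Lemma HH_range t : 0 < t < sig -> 0 < HH t < 1.
Proof.
  intros H. assert (Hu : t ^ 6 < 1/2) by (apply t6_sig; lra). pose proof (ww_range t H).
  assert (HP : 0 < HH t).
  { unfold HH. apply Rdiv_lt_0_compat. apply Rmult_lt_0_compat. lra. apply pow_lt; lra.
    apply Rmult_lt_0_compat. lra. apply pow_lt; lra. }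
  split; auto.
  pose proof (HH_1mHH t ltac:(lra)). pose proof (kk_pos t H).
  assert (0 < (1 - t^6) * kk t ^ 6). { apply Rmult_lt_0_compat. lra. apply pow_lt; lra. }
  nra.
Qed.

Lemma hh_range t : 0 < t < sig -> 0 < hh t < 1.
Proof.
  intros H. pose proof (HH_range t H). pose proof (t6_sig t ltac:(lra)).
  rewrite hh_H by lra. split. unfold Rpower; apply exp_pos.
  assert (Hl : Rpower (HH t) (1/6) < Rpower 1 (1/6)) by (apply Rlt_Rpower_l; lra).
  rewrite Rpower_one in Hl; exact Hl.
Qed.

Lemma hh_0 : hh 0 = 0.
Proof. unfold hh; ring. Qed.

Lemma hh6 t : 0 < t < sig -> hh t ^ 6 = HH t.
Proof.
  intros H. pose proof (HH_range t H). pose proof (t6_sig t ltac:(lra)).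
  rewrite hh_H by lra. rewrite <- rp6 by (unfold Rpower; apply exp_pos).
  rewrite Rpower_mult. replace (1/6*6) with 1 by field. apply Rpower_1; lra.
Qed.

Lemma hh_deriv t : 0 < t < sig ->
  is_derive hh t (1/6 * Rpower (HH t) (1/6 - 1) * (12 * kk t ^ 5)).
Proof.
  intros H. pose proof (HH_range t H). pose proof sig_lt1.
  apply is_derive_ext_loc with (f := fun u => Rpower (HH u) (1/6)).
  { exists (mkposreal (Rmin t (1 - t)) ltac:(apply Rmin_pos; lra)). intros u Hu.
    change (Rabs (u - t) < Rmin t (1 - t)) in Hu. apply Rabs_lt_between' in Hu.
    pose proof (Rmin_l t (1-t)). pose proof (Rmin_r t (1-t)).
    symmetry; apply hh_H. lra. replace 1 with (1^6) by ring. apply powlt; lra || lia. }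
  replace (1/6 * Rpower (HH t) (1/6 - 1) * (12 * kk t ^ 5)) with
    (scal (12 * kk t ^ 5) (1/6 * Rpower (HH t) (1/6 - 1))).
  2:{ unfold scal; simpl; unfold mult; simpl; ring. }
  apply (is_derive_comp (K:=R_AbsRing) (V:=R_NormedModule) (fun x => Rpower x (1/6)) HH t).
  - apply is_derive_Reals. apply derivable_pt_lim_power. lra.
  - apply HH_deriv. pose proof (t6_sig t ltac:(lra)). lra.
Qed.

Lemma key_identity t : 0 < t < sig ->
  (1/6 * Rpower (HH t) (1/6 - 1) * (12 * kk t ^ 5)) * f0 (hh t) = 2 * f0 t.
Proof.
  intros H. pose proof (HH_range t H). pose proof (hh_range t H). pose proof (kk_pos t H).
  pose proof (t6_sig t ltac:(lra)).
  rewrite !f0_pos_eq by lra. rewrite hh6 by auto.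
  replace (1/6 - 1) with (-(5/6)) by field.
  transitivity (2 * kk t ^ 5 * (Rpower (HH t) (-(5/6)) * Rpower (1 - HH t) (-(5/6)))). field.
  rewrite Rpower_mult_distr by lra.
  rewrite Rmult_comm with (r1 := HH t). rewrite HH_1mHH by lra.
  rewrite <- Rpower_mult_distr. 2: lra. 2: apply pow_lt; lra.
  rewrite <- (rp6 (kk t)) by lra. rewrite Rpower_mult.
  assert (E5 : INR 5 = 5) by (simpl; ring). replace (6 * -(5/6)) with (- INR 5) by (rewrite E5; field).
  rewrite (Rpower_Ropp (kk t)), Rpower_pow by lra. field. lra.
Qed.
Lemma hh_cont t : t ^ 6 < 1 -> continuity_pt hh t.
Proof. intros H. apply continuity_pt_filterlim. apply exd_cont. apply hh_exd; auto. Qed.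

Lemma hh_lt1 t : 0 <= t < sig -> 0 <= hh t < 1.
Proof. intros H. destruct (Req_dec t 0). subst; rewrite hh_0; lra.
  pose proof (hh_range t ltac:(lra)); lra. Qed.

Lemma Phi_zero s : 0 <= s < sig -> FF (hh s) = 2 * FF s.
Proof.
  intros Hs. destruct (Req_dec s 0) as [E|E].
  { subst. rewrite hh_0, FF_0. ring. }
  pose proof sig_lt1.
  destruct (MVT_gen (fun t => FF (hh t) - 2 * FF t) 0 s (fun _ => 0)) as [c [Hc Heq]].
  - rewrite Rmin_left, Rmax_right by lra. intros x Hx.
    pose proof (hh_range x ltac:(lra)).
    assert (D1 : is_derive (fun t => FF (hh t)) x
              (scal (1/6 * Rpower (HH x) (1/6 - 1) * (12 * kk x ^ 5)) (f0 (hh x)))).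
    { apply (is_derive_comp (K:=R_AbsRing) (V:=R_NormedModule) FF hh x).
      apply FF_deriv; lra. apply hh_deriv; lra. }
    assert (D2 : is_derive FF x (f0 x)) by (apply FF_deriv; lra).
    pose proof (is_derive_scal FF x 2 _ D2) as D3.
    pose proof (is_derive_minus (K:=R_AbsRing) (V:=R_NormedModule) _ _ x _ _ D1 D3) as D4.
    eapply is_derive_ext. 2: { replace 0 with (minus (scal (1/6 * Rpower (HH x) (1/6 - 1) * (12 * kk x ^ 5)) (f0 (hh x))) (2 * (f0 x))). exact D4.
      unfold minus, scal, plus, opp; simpl; unfold mult; simpl. rewrite key_identity by lra. ring. }
    intros t; reflexivity.
  - rewrite Rmin_left, Rmax_right by lra. intros x Hx.
    assert (Hx6 : x ^ 6 < 1). { replace 1 with (1^6) by ring. apply powlt; lra || lia. }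
    apply continuity_pt_minus.
    + change (continuity_pt (comp FF hh) x). apply continuity_pt_comp. apply hh_cont; auto.
      apply FF_cont. pose proof (hh_lt1 x ltac:(lra)); lra.
    + change (continuity_pt (mult_real_fct 2 FF) x). apply continuity_pt_scal. apply FF_cont; lra.
  - rewrite hh_0, FF_0 in Heq. lra.
Qed.
Definition LL := 2 * FF sig.

Lemma FF_le_L b : 0 < b < 1 -> FF b <= LL.
Proof.
  intros Hb. pose proof sig_pos. pose proof sig_lt1.
  destruct (Ranalysis5.IVT_interv (fun t => hh t - b) 0 sig) as [s [Hs Hsb]].
  - intros a Ha. apply continuity_pt_minus. apply hh_cont.
    replace 1 with (1^6) by ring. apply powlt; lra || lia.
    apply continuity_pt_const. intros u v; reflexivity.
  - lra.
  - rewrite hh_0; lra.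
  - rewrite hh_sig; lra.
  - assert (s <> sig). { intros ->. rewrite hh_sig in Hsb. lra. }
    replace b with (hh s) by lra. rewrite Phi_zero by lra. unfold LL.
    apply Rmult_le_compat_l. lra. apply FF_mono; lra.
Qed.

Lemma FF_lt_L b : 0 <= b < 1 -> FF b < LL.
Proof.
  intros Hb. apply Rlt_le_trans with (FF ((b+1)/2)). apply FF_strict; lra.
  apply FF_le_L; lra.
Qed.

Lemma FF_sig_pos : 0 < FF sig.
Proof. rewrite <- FF_0. apply FF_strict. apply sig_pos. apply sig_lt1. Qed.

Lemma RInt_gen_L : is_RInt_gen f0 (at_point 0) (at_left 1) LL.
Proof.
  unfold is_RInt_gen, filterlimi, filter_le, filtermapi.
  intros P [eps HP].
  pose proof sig_pos. pose proof sig_lt1.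
  assert (Hc := FF_cont sig ltac:(lra)).
  rewrite continuity_pt_locally in Hc.
  destruct (Hc (mkposreal (eps/2) ltac:(destruct eps; simpl; lra))) as [d Hd].
  assert (Hd0 : 0 < d) by apply cond_pos.
  set (s0 := Rmax (sig/2) (sig - d/2)).
  assert (Hs0 : sig/2 <= s0 < sig).
  { unfold s0. split. apply Rmax_l. apply Rmax_lub_lt; lra. }
  assert (Hs0' : Rabs (FF s0 - FF sig) < eps/2).
  { apply Hd. change (Rabs (s0 - sig) < d). apply Rabs_lt_between'.
    assert (sig - d/2 <= s0) by apply Rmax_r. lra. }
  set (y0 := hh s0).
  assert (Hy0 : 0 <= y0 < 1) by (apply hh_lt1; lra).
  apply Filter_prod with (Q := fun a => a = 0) (R := fun b => y0 < b < 1).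
  - reflexivity.
  - exists (mkposreal (1 - y0) ltac:(lra)). intros y Hy Hy1.
    change (Rabs (y - 1) < 1 - y0) in Hy. apply Rabs_lt_between' in Hy. lra.
  - intros a b -> Hb. exists (RInt f0 0 b). split.
    + apply (RInt_correct (V:=R_CompleteNormedModule)). apply exRI; lra.
    + apply HP. change (Rabs (RInt f0 0 b - LL) < eps). rewrite <- FF_lt1 by lra.
      assert (FF b <= LL) by (apply FF_le_L; lra).
      assert (FF y0 <= FF b) by (apply FF_mono; lra).
      assert (FF y0 = 2 * FF s0) by (apply Phi_zero; lra).
      apply Rabs_lt_between'. unfold LL in *. apply Rabs_lt_between' in Hs0'. lra.
Qed.

Lemma pi_L : pi_pq (6/5) 6 = 2 * LL.
Proof.
  unfold pi_pq. f_equal.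
  apply (is_RInt_gen_unique (V:=R_CompleteNormedModule) (Fa := at_point 0) (Fb := at_left 1) f0 LL).
  exact RInt_gen_L.
Qed.

Lemma FF_1 : FF 1 = LL.
Proof. unfold FF, F_pq. destruct (Rlt_dec 1 1). lra. fold f0. rewrite pi_L. field. Qed.
Lemma FF_strict01 a b : 0 <= a -> a < b -> b <= 1 -> FF a < FF b.
Proof.
  intros. destruct (Req_dec b 1). subst. rewrite FF_1. apply FF_lt_L; lra.
  apply FF_strict; lra.
Qed.

Lemma FF_inj a b : 0 <= a <= 1 -> 0 <= b <= 1 -> FF a = FF b -> a = b.
Proof.
  intros Ha Hb E. destruct (Rtotal_order a b) as [h|[h|h]]; auto.
  pose proof (FF_strict01 a b ltac:(lra) h ltac:(lra)); lra.
  pose proof (FF_strict01 b a ltac:(lra) h ltac:(lra)); lra.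
Qed.

Lemma sin0_spec u y : 0 <= y <= 1 -> FF y = u -> sin0_pq (6/5) 6 u = y.
Proof.
  intros Hy E. unfold sin0_pq.
  destruct (epsilon_spec (inhabits 0) (fun x => 0 <= x <= 1 /\ F_pq (6/5) 6 x = u)) as [H1 H2].
  { exists y; split; auto. }
  apply FF_inj; auto. change (F_pq (6/5) 6 (epsilon (inhabits 0) (fun x => 0 <= x <= 1 /\ F_pq (6/5) 6 x = u)) = FF y).
  rewrite H2; auto.
Qed.

Lemma LL_pos : 0 < LL.
Proof. unfold LL; pose proof FF_sig_pos; lra. Qed.

Lemma sin_red y : 0 <= y <= LL -> sin_pq (6/5) 6 y = sin0_pq (6/5) 6 y.
Proof.
  intros Hy. pose proof LL_pos. unfold sin_pq. rewrite pi_L.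
  set (r := (y + 2 * LL) / (2 * (2 * LL))).
  assert (Hr : 1/2 <= r < 1).
  { unfold r. split. apply Rmult_le_reg_r with (4 * LL). lra. field_simplify; lra.
    apply Rmult_lt_reg_r with (4 * LL). lra. field_simplify; lra. }
  assert (Hup : up r = 1%Z). { symmetry; apply tech_up; simpl; lra. }
  unfold Int_part. rewrite Hup. simpl.
  replace (y - 2 * (2 * LL) * 0) with y by ring.
  destruct (Rlt_dec y 0). lra.
  destruct (Rle_dec y (2 * LL / 2)). reflexivity. exfalso; apply n0; lra.
Qed.
Definition ub := (1 + sig) / 2.
Definition UU := FF ub.

Lemma ub_facts : sig < ub < 1.
Proof. pose proof sig_lt1. unfold ub; lra. Qed.

Lemma UU_facts : FF sig < UU < LL.
Proof. pose proof ub_facts. pose proof sig_pos. unfold UU. split. apply FF_strict; lra.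
  apply FF_lt_L; lra. Qed.

Lemma FF_surj u c : 0 <= c < 1 -> 0 <= u <= FF c -> exists y, 0 <= y <= c /\ FF y = u.
Proof.
  intros Hc Hu. destruct (Req_dec u 0) as [->|H0]. exists 0; split. lra. apply FF_0.
  destruct (Req_dec u (FF c)) as [->|H1]. exists c; split; [lra|auto].
  destruct (Req_dec c 0) as [->|H2]. rewrite FF_0 in Hu; lra.
  destruct (Ranalysis5.IVT_interv (fun t => FF t - u) 0 c) as [y [Hy E]].
  - intros a Ha. apply continuity_pt_minus. apply FF_cont; lra.
    apply continuity_pt_const. intros p q; reflexivity.
  - lra.
  - rewrite FF_0; lra.
  - lra.
  - exists y; split; auto. simpl in E; lra.
Qed.

Lemma sin_on u : 0 <= u <= UU -> 0 <= sin_pq (6/5) 6 u <= ub /\ FF (sin_pq (6/5) 6 u) = u.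
Proof.
  intros Hu. pose proof UU_facts. pose proof ub_facts.
  destruct (FF_surj u ub ltac:(pose proof sig_pos; lra) Hu) as [y [Hy E]].
  rewrite sin_red by lra. rewrite (sin0_spec u y) by lra. auto.
Qed.

Lemma cos_val x : 0 < x <= FF sig ->
  cos_pq (6/5) 6 x = Rpower (1 - sin_pq (6/5) 6 x ^ 6) (5/6).
Proof.
  intros Hx. pose proof UU_facts. pose proof ub_facts. pose proof sig_pos. pose proof FF_sig_pos.
  set (g := sin_pq (6/5) 6).
  assert (Hg : forall u, 0 <= u <= UU -> 0 <= g u <= ub /\ FF (g u) = u) by (apply sin_on).
  assert (g0 : g 0 = 0). { destruct (Hg 0 ltac:(lra)) as [? E].
    assert (E' : FF (g 0) = FF 0) by (rewrite FF_0; auto). apply FF_inj in E'; lra. }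
  assert (gU : g UU = ub). { destruct (Hg UU ltac:(lra)) as [? E]. apply FF_inj in E; lra. }
  assert (Prf : forall a, g 0 <= a <= g UU -> derivable_pt FF a).
  { intros a Ha. rewrite g0, gU in Ha. exists (f0 a). apply is_derive_Reals, FF_deriv. lra. }
  assert (Hgx : g 0 <= g x <= g UU).
  { rewrite g0, gU. destruct (Hg x ltac:(lra)); lra. }
  assert (Hcont : continuity_pt g x).
  { apply (Ranalysis5.continuity_pt_recip_interv FF g 0 ub).
    - lra.
    - intros a b ? ? ?. apply FF_strict; lra.
    - intros a Ha1 Ha2. rewrite FF_0 in Ha1. unfold comp, id. apply Hg. fold UU in Ha2. lra.
    - intros a Ha1 Ha2. rewrite FF_0 in Ha1. apply Hg. fold UU in Ha2. lra.
    - intros a Ha. apply FF_cont; lra.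
    - rewrite FF_0. fold UU. lra. }
  pose proof (Ranalysis5.derivable_pt_lim_recip_interv FF g 0 UU x Prf Hcont ltac:(lra) ltac:(lra) Hgx) as D.
  assert (Hd : derive_pt FF (g x) (Prf (g x) Hgx) = f0 (g x)).
  { apply derive_pt_eq_0. apply is_derive_Reals, FF_deriv. destruct (Hg x ltac:(lra)); lra. }
  rewrite Hd in D.
  assert (D' : derivable_pt_lim g x (1 / f0 (g x))).
  { apply D. intros a Ha. unfold comp, id. apply Hg; lra. pose proof (f0_pos (g x)); lra. }
  unfold cos_pq. fold g. rewrite (is_derive_unique g x (1 / f0 (g x))).
  2: apply is_derive_Reals; exact D'.
  assert (Hgx0 : 0 < g x).
  { destruct (Hg x ltac:(lra)) as [? E]. destruct (Req_dec (g x) 0) as [E0|]; [|lra].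
    rewrite E0, FF_0 in E. lra. }
  rewrite f0_pos_eq by auto. rewrite Rpower_Ropp. field.
  unfold Rpower; apply Rgt_not_eq, exp_pos.
Qed.
Lemma rhs_eq y : 0 < y -> y ^ 6 < 1 ->
  Rpower 2 (1/6) * y * Rpower (1 - y^6) (1/6) * Rpower (3 + ww y) (1/2)
   / (Rpower (pp y) (1/4) * Rpower (1 + ww y) (1/6)) = hh y.
Proof.
  intros H0 H1. pose proof (ww_ge1 y H1) as Hw. pose proof (ww_sq y H1) as Hsq.
  pose proof (KK_pos y H1) as HK.
  set (w := ww y) in *.
  assert (E3 : INR 3 = 3) by (simpl; ring).
  assert (lnK : ln (KK y) = ln 2 + ln (1 - y^6) + 3 * ln (3 + w) - (3 * ln w + ln (1 + w))).
  { unfold KK. fold w. unfold Rdiv.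
    rewrite ln_mult, ln_Rinv, ln_mult, ln_mult, ln_pow, ln_mult, ln_pow; try lra.
    rewrite E3. rewrite (Rplus_comm w 3). ring.
    all: try apply pow_lt; try lra.
    all: try (apply Rmult_lt_0_compat; try apply pow_lt; lra).
    apply Rinv_0_lt_compat. apply Rmult_lt_0_compat; try apply pow_lt; lra. }
  assert (lnP : ln (pp y) = 2 * ln w).
  { rewrite <- Hsq. rewrite ln_mult by lra. ring. }
  unfold hh. unfold Rpower. rewrite lnK, lnP.
  transitivity (y * exp (1/6 * ln 2 + 1/6 * ln (1 - y^6) + 1/2 * ln (3 + w)
                 + - (1/4 * (2 * ln w)) + - (1/6 * ln (1 + w)))).
  { rewrite !exp_plus, !exp_Ropp. field. split; apply Rgt_not_eq, exp_pos. }
  f_equal. f_equal. field.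
Qed.

Theorem theorem1p1 :
  forall x : R, 0 <= x <= pi_pq (6/5) 6 / 4 ->
  let s := sin_pq (6/5) 6 x in
  let c := cos_pq (6/5) 6 x in
  let D := 1 + 32 * s ^ 6 * Rpower c (6/5) in
  sin_pq (6/5) 6 (2 * x) =
    Rpower 2 (1/6) * s * Rpower c (1/5) * Rpower (3 + sqrt D) (1/2)
    / (Rpower D (1/4) * Rpower (1 + sqrt D) (1/6)).
Proof.
  intros x Hx. cbv zeta.
  rewrite pi_L in Hx. unfold LL in Hx.
  pose proof UU_facts. pose proof ub_facts. pose proof sig_pos. pose proof sig_lt1.
  assert (Hsin0 : sin_pq (6/5) 6 0 = 0).
  { pose proof FF_sig_pos. destruct (sin_on 0 ltac:(lra)) as [? E].
    assert (E' : FF (sin_pq (6/5) 6 0) = FF 0) by (rewrite FF_0; auto). apply FF_inj in E'; lra. }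
  destruct (Req_dec x 0) as [->|Hx0].
  { replace (2 * 0) with 0 by ring. rewrite Hsin0. unfold Rdiv. ring. }
  destruct (sin_on x ltac:(lra)) as [Hy E].
  set (y := sin_pq (6/5) 6 x) in *.
  assert (Hysig : y <= sig).
  { destruct (Rle_lt_dec y sig) as [h|h]; auto.
    pose proof (FF_strict sig y h ltac:(lra)). lra. }
  assert (Hy0 : 0 < y).
  { destruct (Req_dec y 0) as [E0|]; [|lra]. rewrite E0, FF_0 in E. lra. }
  assert (Hy6 : y ^ 6 < 1). { replace 1 with (1^6) by ring. apply powlt; lra || lia. }
  assert (Hc : cos_pq (6/5) 6 x = Rpower (1 - y ^ 6) (5/6)) by (apply cos_val; lra).
  rewrite Hc.
  assert (Hy6' : 0 < 1 - y ^ 6) by lra.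
  rewrite !Rpower_mult. replace (5/6 * (6/5)) with 1 by field. replace (5/6*(1/5)) with (1/6) by field.
  rewrite Rpower_1 by lra.
  change (1 + 32 * y ^ 6 * (1 - y ^ 6)) with (pp y). change (sqrt (pp y)) with (ww y).
  rewrite rhs_eq by lra.
  rewrite sin_red by (unfold LL; lra).
  apply sin0_spec.
  - destruct (Req_dec y sig) as [->|hn]. rewrite hh_sig; lra.
    pose proof (hh_range y ltac:(lra)); lra.
  - destruct (Req_dec y sig) as [Ey|hn].
    + rewrite Ey, hh_sig, FF_1. unfold LL. rewrite <- Ey, E. ring.
    + rewrite Phi_zero by lra. rewrite E; ring.
Qed.
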